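(* Let $d\ge1$ be an integer, $\gamma^2>0$, $\sigma^2\ge 0$, and let there be $I$ client types with data sizes $D_1,\dots,D_I>0$. Let $\mathcal{K}$ be a non-empty coalition of participants containing $K_i\ge 0$ participants of type $i$ for each $i\in\{1,\dots,I\}$, with $K=\sum_{i=1}^I K_i\ge 1$, and let $\varepsilon_{\mathcal{K}}$ denote its generalization error. Let $n\notin\mathcal{K}$ be a client with data size $D>0$ and let $\varepsilon_{\mathcal{K}\cup\{n\}}$ be the generalization error of the coalition $\mathcal{K}\cup\{n\}$. Define $$\eta=\frac{(2K+1)\sum_{i=1}^I K_i/D_i}{K^2}-\frac{(K+1)\sigma^2}{d\gamma^2K}.$$ Then $\varepsilon_{\mathcal{K}}-\varepsilon_{\mathcal{K}\cup\{n\}}\ge 0$ if and only if $1/D\le\eta$.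
   Context: For a finite non-empty coalition $\mathcal{S}$ of participants, where participant $k$ has data size $D_k$, with $S=|\mathcal{S}|$, the generalization error of the federated model trained by $\mathcal{S}$ is defined as $\varepsilon_{\mathcal{S}}=\frac{d\gamma^2}{S^2}\sum_{k\in\mathcal{S}}\frac{1}{D_k}+\frac{S-1}{S}\sigma^2$. Here $d$ is the feature dimension, $\gamma^2$ the data (target-noise) variance and $\sigma^2$ the client variance. The quantity $\varepsilon_{\mathcal{K}}-\varepsilon_{\mathcal{K}\cup\{n\}}$ is called the network effect of client $n$'s participation. *)

(* Defs.v *)
From mathcomp Require Import all_boot all_order all_algebra.
Set Implicit Arguments. Unset Strict Implicit. Unset Printing Implicit Defensive.
Import Order.TTheory GRing.Theory Num.Theory.
Local Open Scope ring_scope.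

Definition gen_error (R : realFieldType) (P : finType) (d : nat) (gamma2 sigma2 : R)
  (Dsz : P -> R) (A : {set P}) : R :=
  (d%:R * gamma2) / (#|A|%:R ^+ 2) * (\sum_(k in A) (Dsz k)^-1)
  + (#|A|%:R - 1) / #|A|%:R * sigma2.

(* Main.v *)
Require Import Defs.
From mathcomp Require Import all_boot all_order all_algebra.
From mathcomp Require Import ring lra.
Import Order.TTheory GRing.Theory Num.Theory.
Local Open Scope ring_scope.

Theorem theorem1 (R : realFieldType) (d : nat) (gamma2 sigma2 : R)
  (I : nat) (Dtype : 'I_I -> R)
  (P : finType) (Dsz : P -> R) (typ : P -> 'I_I)
  (K : {set P}) (n : P) (D : R) :
  (1 <= d)%N -> 0 < gamma2 -> 0 <= sigma2 ->
  (forall i, 0 < Dtype i) ->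
  (0 < #|K|)%N ->
  (forall k, k \in K -> Dsz k = Dtype (typ k)) ->
  n \notin K -> Dsz n = D -> 0 < D ->
  let Ki := fun i : 'I_I => #|[set k in K | typ k == i]| in
  let Kc : R := #|K|%:R in
  let eta := (2 * Kc + 1) * (\sum_(i < I) (Ki i)%:R / Dtype i) / (Kc ^+ 2)
             - (Kc + 1) * sigma2 / (d%:R * gamma2 * Kc) in
  (0 <= gen_error d gamma2 sigma2 Dsz K - gen_error d gamma2 sigma2 Dsz (n |: K))
  <-> D^-1 <= eta.
Proof.
move=> hd hg hs hD hK hDK hn hDn hD0 Ki Kc eta.
have hS : \sum_(k in K) (Dsz k)^-1 = \sum_(i < I) (Ki i)%:R / Dtype i.
  rewrite (eq_bigr (fun k => (Dtype (typ k))^-1)); last by move=> k /hDK ->.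
  rewrite (partition_big typ xpredT) //=.
  apply: eq_bigr => i _.
  rewrite (eq_bigr (fun _ => (Dtype i)^-1)); last by move=> k /andP[_ /eqP ->].
  rewrite -big_set sumr_const /Ki mulr_natl.
  by [].
have hc : #|n |: K| = (#|K|).+1 by rewrite cardsU1 hn.
rewrite /gen_error hc big_setU1 //= hDn hS.
rewrite -/Kc /eta.
set S := \sum_(i < I) _.
set c := d%:R * gamma2.
have hc0 : 0 < c by rewrite /c mulr_gt0 // ltr0n.
have hk0 : 0 < Kc by rewrite /Kc ltr0n.
have -> : (#|K|.+1)%:R = Kc + 1 by rewrite /Kc -addn1 natrD.
have e : c / (Kc ^+ 2) * S + (Kc - 1) / Kc * sigma2 -
  (c / ((Kc + 1) ^+ 2) * (D^-1 + S) + (Kc + 1 - 1) / (Kc + 1) * sigma2)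
  = c / ((Kc + 1) ^+ 2) * ((2 * Kc + 1) * S / Kc ^+ 2 - (Kc + 1) * sigma2 / (c * Kc) - D^-1).
  field.
  by rewrite !lt0r_neq0 // ?ltr_wpDl ?addr_gt0.
rewrite e pmulr_rge0 ?subr_ge0 //.
by rewrite divr_gt0 // exprn_gt0 // addr_gt0.
Qed.
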